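(* The polynomials $Q_A,R_A\in\mathbb Q[p,d]$ are nonzero at every point of $\Sigma_A^\circ:=\{(p,d):\tfrac12<p<1,\ 0<d<\tfrac12\}$, and the polynomials $Q_B,R_B\in\mathbb Q[p,d,e]$ are nonzero at every point of $\Sigma_B^\circ:=\{(p,d,e):\tfrac12<p<1,\ d>0,\ e>0,\ d+e<\tfrac12\}$, where \begin{align*} Q_A={}&8d^4-8d^3p+2d^3-48d^2p^2+22d^2p-3d^2-8dp^3+22dp^2-6dp+8p^4+2p^3-3p^2,\\ R_A={}&8d^4-2d^3-24d^2p^2+6d^2p-d^2+10dp^2-2dp+2p^3-p^2,\\ Q_B={}&8d^4+32d^3e-8d^3p+2d^3+40d^2e^2-56d^2ep+16d^2e-48d^2p^2+22d^2p-3d^2\\ &+16de^3-72de^2p+26de^2-72dep^2+44dep-6de-8dp^3+22dp^2-6dp\\ &-24e^3p+12e^3-32e^2p^2+22e^2p-3e^2+12ep^2-6ep+8p^4+2p^3-3p^2,\\ R_B={}&8d^4+32d^3e-2d^3+40d^2e^2-24d^2ep-24d^2p^2+6d^2p-d^2\\ &+16de^3-32de^2p+6de^2-24dep^2+12dep-2de+10dp^2-2dp\\ &-8e^3p+4e^3-8e^2p^2+6e^2p-e^2+4ep^2-2ep+2p^3-p^2. \end{align*} Moreover, the branch maps $F_0^A,F_1^A$ are $C^\infty$ on $\Sigma_A^\circ$ and $F_0^B,F_1^B$ are $C^\infty$ on $\Sigma_B^\circ$.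
   Context: Let $$L_A=\begin{pmatrix}1&1&-1&-1\\-1&1&1&1\\1&-1&-1&1\\1&-1&1&-1\end{pmatrix},\qquad L_B=\begin{pmatrix}1&1&-1&-1\\-1&1&1&1\\1&-1&-1&1\\1&-1&1&-1\\1&-1&1&1\end{pmatrix}.$$ For a sign matrix $L$ and a distribution $u$ on its rows, the one-step AdaBoost update using column $j$ is $u'_i=u_i/(1+\mu L_{ij})$ with $\mu=(u^\top L)_j$. Chart coordinates: $(p,d)$ corresponds to the distribution $(p-\tfrac12,\,1-p,\,\tfrac12-d,\,d)$ on the rows of $L_A$, and $(p,d,e)$ corresponds to $(p-\tfrac12,\,1-p,\,\tfrac12-d-e,\,d,\,e)$ on the rows of $L_B$. For $G\in\{A,B\}$, the branch map $F_0^G$ is the composition of the five one-step updates on $L_G$ using columns $1,3,4,1,2$ in this order, and $F_1^G$ the composition using columns $1,4,3,1,2$, each applied to the distribution given by the chart coordinates and with the output (whose first two entries sum to $\tfrac12$) expressed again in chart coordinates. The polynomials $Q_A$ and $R_A$ are the reduced denominators of the first and second chart coordinates of $F_0^A$, and $Q_B,R_B$ are the reduced denominators of the coordinates of $F_0^B$ (with $R_B$ the common denominator of its second and third coordinates). *)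

(* Defs.v *)
From HB Require Import structures.
From mathcomp Require Import all_boot all_order all_algebra.
From mathcomp Require Import all_classical all_reals all_analysis.
Set Implicit Arguments. Unset Strict Implicit. Unset Printing Implicit Defensive.
Import Order.TTheory GRing.Theory Num.Theory.
Import numFieldNormedType.Exports.
Local Open Scope classical_set_scope.
Local Open Scope ring_scope.

Definition rowl (R : nzRingType) (n : nat) (s : seq R) : 'rV[R]_n :=
  \row_(i < n) nth 0 s i.

Definition LA (R : nzRingType) : 'M[R]_(4,4) :=
  \matrix_(i < 4, j < 4) nth 0 (nth [::]
    [:: [:: 1; 1; -1; -1];
        [:: -1; 1; 1; 1];
        [:: 1; -1; -1; 1];
        [:: 1; -1; 1; -1]] i) j.

Definition LB (R : nzRingType) : 'M[R]_(5,4) :=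
  \matrix_(i < 5, j < 4) nth 0 (nth [::]
    [:: [:: 1; 1; -1; -1];
        [:: -1; 1; 1; 1];
        [:: 1; -1; -1; 1];
        [:: 1; -1; 1; -1];
        [:: 1; -1; 1; 1]] i) j.

(* One-step AdaBoost update with column j: u'_i = u_i / (1 + mu L_ij),
   mu = (u^T L)_j.  Distributions are row vectors. *)
Definition ab_step (R : fieldType) (m n : nat) (L : 'M[R]_(m,n)) (j : 'I_n)
  (u : 'rV[R]_m) : 'rV[R]_m :=
  let mu := (u *m L) 0 j in \row_(i < m) (u 0 i / (1 + mu * L i j)).

Definition ab_branch (R : fieldType) (m : nat) (L : 'M[R]_(m,4))
  (c1 c2 c3 c4 c5 : 'I_4) (u : 'rV[R]_m) : 'rV[R]_m :=
  ab_step L c5 (ab_step L c4 (ab_step L c3 (ab_step L c2 (ab_step L c1 u)))).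

Definition chartA (R : fieldType) (x : 'rV[R]_2) : 'rV[R]_4 :=
  let p := x 0 0 in let d := x 0 1 in
  rowl 4 [:: p - 2^-1; 1 - p; 2^-1 - d; d].
Definition chartB (R : fieldType) (x : 'rV[R]_3) : 'rV[R]_5 :=
  let p := x 0 0 in let d := x 0 1 in let e := x 0 2 in
  rowl 5 [:: p - 2^-1; 1 - p; 2^-1 - d - e; d; e].

Definition unchartA (R : fieldType) (u : 'rV[R]_4) : 'rV[R]_2 :=
  rowl 2 [:: u 0 0 + 2^-1; u 0 3].
Definition unchartB (R : fieldType) (u : 'rV[R]_5) : 'rV[R]_3 :=
  rowl 3 [:: u 0 0 + 2^-1; u 0 3; u 0 4].

(* Branch maps: F_0 uses columns 1,3,4,1,2 ; F_1 uses columns 1,4,3,1,2. *)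
Definition F0A (R : fieldType) (x : 'rV[R]_2) : 'rV[R]_2 :=
  unchartA (ab_branch (LA R) (inord 0) (inord 2) (inord 3) (inord 0) (inord 1) (chartA x)).
Definition F1A (R : fieldType) (x : 'rV[R]_2) : 'rV[R]_2 :=
  unchartA (ab_branch (LA R) (inord 0) (inord 3) (inord 2) (inord 0) (inord 1) (chartA x)).
Definition F0B (R : fieldType) (x : 'rV[R]_3) : 'rV[R]_3 :=
  unchartB (ab_branch (LB R) (inord 0) (inord 2) (inord 3) (inord 0) (inord 1) (chartB x)).
Definition F1B (R : fieldType) (x : 'rV[R]_3) : 'rV[R]_3 :=
  unchartB (ab_branch (LB R) (inord 0) (inord 3) (inord 2) (inord 0) (inord 1) (chartB x)).

Definition SigmaA (R : realType) : set 'rV[R]_2 :=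
  [set x | 2^-1 < x 0 0 < 1 /\ 0 < x 0 1 < 2^-1].
Definition SigmaB (R : realType) : set 'rV[R]_3 :=
  [set x | 2^-1 < x 0 0 < 1 /\ 0 < x 0 1 /\ 0 < x 0 2 /\ x 0 1 + x 0 2 < 2^-1].

Definition QA (R : nzRingType) (p d : R) : R :=
  8 * d^+4 - 8 * d^+3 * p + 2 * d^+3 - 48 * d^+2 * p^+2 + 22 * d^+2 * p - 3 * d^+2 - 8 * d * p^+3
  + 22 * d * p^+2 - 6 * d * p + 8 * p^+4 + 2 * p^+3 - 3 * p^+2.
Definition RA (R : nzRingType) (p d : R) : R :=
  8 * d^+4 - 2 * d^+3 - 24 * d^+2 * p^+2 + 6 * d^+2 * p - d^+2 + 10 * d * p^+2 - 2 * d * p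
  + 2 * p^+3 - p^+2.
Definition QB (R : nzRingType) (p d e : R) : R :=
  8 * d^+4 + 32 * d^+3 * e - 8 * d^+3 * p + 2 * d^+3 + 40 * d^+2 * e^+2 - 56 * d^+2 * e * p
  + 16 * d^+2 * e - 48 * d^+2 * p^+2 + 22 * d^+2 * p - 3 * d^+2
  + 16 * d * e^+3 - 72 * d * e^+2 * p + 26 * d * e^+2 - 72 * d * e * p^+2 + 44 * d * e * p - 6 * d * e
  - 8 * d * p^+3 + 22 * d * p^+2 - 6 * d * p
  - 24 * e^+3 * p + 12 * e^+3 - 32 * e^+2 * p^+2 + 22 * e^+2 * p - 3 * e^+2 + 12 * e * p^+2
  - 6 * e * p + 8 * p^+4 + 2 * p^+3 - 3 * p^+2.
Definition RB (R : nzRingType) (p d e : R) : R :=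
  8 * d^+4 + 32 * d^+3 * e - 2 * d^+3 + 40 * d^+2 * e^+2 - 24 * d^+2 * e * p - 24 * d^+2 * p^+2
  + 6 * d^+2 * p - d^+2
  + 16 * d * e^+3 - 32 * d * e^+2 * p + 6 * d * e^+2 - 24 * d * e * p^+2 + 12 * d * e * p - 2 * d * e
  + 10 * d * p^+2 - 2 * d * p
  - 8 * e^+3 * p + 4 * e^+3 - 8 * e^+2 * p^+2 + 6 * e^+2 * p - e^+2 + 4 * e * p^+2 - 2 * e * p
  + 2 * p^+3 - p^+2.

Fixpoint iter_deriv (R : realType) (V W : normedModType R) (vs : seq V)
  (f : V -> W) : V -> W :=
  match vs with
  | [::] => f
  | v :: vs' => fun x => derive (iter_deriv vs' f) x v
  end.

Definition smooth_on (R : realType) (V W : normedModType R) (U : set V)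
  (f : V -> W) : Prop :=
  forall vs : seq V, forall x, U x ->
    {for x, continuous (iter_deriv vs f)} /\
    forall v : V, derivable (iter_deriv vs f) x v.

(* Main.v *)
Require Import Defs.
From HB Require Import structures.
From mathcomp Require Import all_boot all_order all_algebra.
From mathcomp Require Import all_classical all_reals all_analysis.
From mathcomp Require Import ring lra.
Import Order.TTheory GRing.Theory Num.Theory.
Import numFieldNormedType.Exports.
Local Open Scope classical_set_scope.
Local Open Scope ring_scope.
Set Implicit Arguments. Unset Strict Implicit. Unset Printing Implicit Defensive.

Section SMdef.
Variables (R : realType) (n : nat) (U : set 'rV[R]_n).
Hypothesis Uopen : forall x, U x -> \forall y \near x, U y.

Inductive SM : ('rV[R]_n -> R) -> Prop :=
| SMc c : SM (fun _ => c)
| SMx i : SM (fun y => y 0 i)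
| SMadd f g : SM f -> SM g -> SM (fun y => f y + g y)
| SMopp f : SM f -> SM (fun y => - f y)
| SMmul f g : SM f -> SM g -> SM (fun y => f y * g y)
| SMinv f : SM f -> (forall x, U x -> f x != 0) -> SM (fun y => (f y)^-1)
| SMeq f g : SM f -> (forall x, U x -> f x = g x) -> SM g.

Lemma SM_cont f : SM f -> forall x, U x -> {for x, continuous f}.
Proof.
elim => {f}.
- by move=> c x _; exact: cst_continuous.
- by move=> i x _; exact: coord_continuous.
- by move=> f g _ Hf _ Hg x Ux; exact: (cvgD (Hf x Ux) (Hg x Ux)).
- by move=> f _ Hf x Ux; exact: (cvgN (Hf x Ux)).
- by move=> f g _ Hf _ Hg x Ux; exact: (cvgM (Hf x Ux) (Hg x Ux)).
- by move=> f _ Hf Hn x Ux; exact: (cvgV (Hn x Ux) (Hf x Ux)).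
- move=> f g _ Hf Hfg x Ux.
  have Hc : f @ x --> g x by rewrite -(Hfg x Ux); exact: Hf.
  apply: cvg_trans _ Hc; apply: (@near_eq_cvg _ _ (nbhs x) (nbhs_filter x)).
  near=> y; rewrite Hfg //; near: y; exact: Uopen.
Unshelve. all: by end_near.
Qed.

Lemma coord_is_derive (x v : 'rV[R]_n) i :
  is_derive x v (fun y : 'rV[R]_n => y 0 i) (v 0 i).
Proof.
apply: DeriveDef; first exact/diff_derivable/differentiable_coord.
rewrite /derive; apply: cvg_lim => //.
apply: cvg_near_cst.
near=> h.
have hn0 : h != 0 by near: h; exact: nbhs_dnbhs_neq.
rewrite /= !mxE addrK /GRing.scale /= mulrA mulVf // mul1r.
Unshelve. all: by end_near.
Qed.

Lemma SM_deriv f : SM f -> forall v, exists g, SM g /\ forall x, U x -> is_derive x v f (g x).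
Proof.
elim => {f}.
- move=> c v; exists (fun _ => 0); split; first exact: SMc.
  by move=> x _; exact: is_derive_cst.
- move=> i v; exists (fun _ => v 0 i); split; first exact: SMc.
  by move=> x _; exact: coord_is_derive.
- move=> f g _ Hf _ Hg v.
  have [f' [Sf' Df']] := Hf v; have [g' [Sg' Dg']] := Hg v.
  exists (fun y => f' y + g' y); split; first exact: SMadd.
  move=> x Ux; have := Df' x Ux; have := Dg' x Ux => d1 d2.
  exact: (@is_deriveD _ _ _ f g x v (f' x) (g' x)).
- move=> f _ Hf v.
  have [f' [Sf' Df']] := Hf v.
  exists (fun y => - f' y); split; first exact: SMopp.
  move=> x Ux; have := Df' x Ux => d1.
  exact: (@is_deriveN _ _ _ f x v (f' x)).
- move=> f g Sf Hf Sg Hg v.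
  have [f' [Sf' Df']] := Hf v; have [g' [Sg' Dg']] := Hg v.
  exists (fun y => f y * g' y + g y * f' y); split.
    by apply: SMadd; apply: SMmul.
  move=> x Ux; have := Df' x Ux; have := Dg' x Ux => d1 d2.
  exact: (@is_deriveM _ _ f g x v (f' x) (g' x)).
- move=> f Sf Hf Hn v.
  have [f' [Sf' Df']] := Hf v.
  exists (fun y => - ((f y)^-1 * (f y)^-1) * f' y); split.
    by apply: SMmul => //; apply: SMopp; apply: SMmul; apply: SMinv.
  move=> x Ux; have d1 := Df' x Ux.
  have df : derivable f x v by case: d1.
  apply: DeriveDef; first exact: derivableV (Hn x Ux) df.
  rewrite (deriveV (Hn x Ux) df).
  by rewrite derive_val /GRing.scale /= expr2 invfM.
- move=> f g _ Hf Hfg v.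
  have [f' [Sf' Df']] := Hf v.
  exists f'; split => // x Ux.
  apply: near_eq_is_derive (Df' x Ux).
  near=> y; apply: Hfg; near: y; exact: Uopen.
Unshelve. all: by end_near.
Qed.

Lemma SM_iter f : SM f -> forall vs, exists g, SM g /\ forall x, U x ->
  iter_deriv vs f x = g x.
Proof.
move=> Sf; elim => [|v vs [g [Sg Hg]]] /=; first by exists f.
have [g' [Sg' Dg']] := SM_deriv Sg v.
exists g'; split => // x Ux.
rewrite (@near_eq_derive _ _ _ _ g); first by rewrite (@derive_val _ _ _ _ _ _ _ (Dg' x Ux)).
near=> y; apply: Hg; near: y; exact: Uopen.
Unshelve. all: by end_near.
Qed.


Lemma SM_iterSM f : SM f -> forall vs, SM (iter_deriv vs f).
Proof.
move=> Sf vs; have [g [Sg Hg]] := SM_iter Sf vs.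
by apply: SMeq Sg _ => x Ux; rewrite Hg.
Qed.

Lemma SM_derivable f : SM f -> forall x v, U x -> derivable f x v.
Proof.
move=> Sf x v Ux; have [g [_ Hg]] := SM_deriv Sf v.
by case: (Hg x Ux).
Qed.

Lemma sum_cont (I : Type) (r : seq I) (h : I -> 'rV[R]_n -> R) (m k : nat)
   (c : I -> 'M[R]_(m,k)) x :
  (forall i, {for x, continuous (h i)}) ->
  (fun y => \sum_(i <- r) h i y *: c i) @ x --> \sum_(i <- r) h i x *: c i.
Proof.
move=> Hh; elim: r => [|a r IH].
  rewrite big_nil.
  have -> : (fun y => \sum_(i <- [::]) h i y *: c i) = fun _ => 0.
    by apply/funext => y; rewrite big_nil.
  exact: (@cvg_cst _ _ _ (nbhs x) (nbhs_filter x)).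
rewrite big_cons.
have -> : (fun y => \sum_(i <- a :: r) h i y *: c i) =
   (fun y => h a y *: c a + \sum_(i <- r) h i y *: c i).
  by apply/funext => y; rewrite big_cons.
have H1 : (fun y => h a y *: c a) @ x --> h a x *: c a.
  exact: (@cvgZ _ _ _ (nbhs x) (nbhs_filter x) _ _ _ _ (Hh a) (@cvg_cst _ (c a) _ (nbhs x) (nbhs_filter x))).
exact: (@cvgD _ _ _ (nbhs x) (nbhs_filter x) _ _ _ _ H1 IH).
Qed.

Lemma mx_cont (m k : nat) (h : 'I_m -> 'I_k -> 'rV[R]_n -> R) x :
  (forall i j, {for x, continuous (h i j)}) ->
  {for x, continuous (fun y => \matrix_(i, j) h i j y)}.
Proof.
move=> Hh.
have E : forall y, \matrix_(i, j) h i j y =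
   \sum_(ij : 'I_m * 'I_k) h ij.1 ij.2 y *: delta_mx ij.1 ij.2.
  move=> y; rewrite [LHS]matrix_sum_delta pair_big /=.
  by apply: eq_bigr => -[i j] _; rewrite mxE.
have -> : (fun y => \matrix_(i, j) h i j y) = (fun y =>
   \sum_(ij : 'I_m * 'I_k) h ij.1 ij.2 y *: delta_mx ij.1 ij.2).
  by apply/funext => y; exact: E.
by apply: sum_cont => -[a b]; exact: Hh.
Qed.

Lemma mx_iter (m k : nat) (F : 'rV[R]_n -> 'M[R]_(m,k)) :
  (forall i j, SM (fun y => F y i j)) ->
  forall vs x, U x ->
  iter_deriv vs F x = \matrix_(i, j) iter_deriv vs (fun y => F y i j) x.
Proof.
move=> SF; elim => [|v vs IH] x Ux /=.
  by apply/matrixP => i j; rewrite mxE.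
set M := fun y => \matrix_(i, j) iter_deriv vs (fun y => F y i j) y.
have Mc : forall i j, (fun y => M y i j) = iter_deriv vs (fun y => F y i j).
  by move=> i j; apply/funext => y; rewrite /M mxE.
have dM : derivable M x v.
  apply/derivable_mxP => i j; rewrite Mc.
  exact: SM_derivable (SM_iterSM (SF i j) vs) x v Ux.
rewrite (@near_eq_derive _ _ _ _ M); last first.
  near=> y; rewrite IH //; near: y; exact: Uopen.
rewrite derive_mx //; apply/matrixP => i j; rewrite !mxE.
by rewrite Mc.
Unshelve. all: by end_near.
Qed.

Lemma mx_smooth (m k : nat) (F : 'rV[R]_n -> 'M[R]_(m,k)) :
  (forall i j, SM (fun y => F y i j)) -> smooth_on U F.
Proof.
move=> SF vs x Ux.
set M := fun y => \matrix_(i, j) iter_deriv vs (fun y => F y i j) y.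
have Mc : forall i j, (fun y => M y i j) = iter_deriv vs (fun y => F y i j).
  by move=> i j; apply/funext => y; rewrite /M mxE.
have near_eq : \forall y \near x, M y = iter_deriv vs F y.
  near=> y; rewrite mx_iter //; near: y; exact: Uopen.
split.
  have Hc : M @ x --> iter_deriv vs F x.
    rewrite -(nbhs_singleton near_eq).
    apply: mx_cont => i j.
    exact: SM_cont (SM_iterSM (SF i j) vs) x Ux.
  apply: cvg_trans _ Hc; apply: (@near_eq_cvg _ _ (nbhs x) (nbhs_filter x)).
  by apply: filterS near_eq => y ->.
move=> v; apply: (@near_eq_derivable _ _ _ M).
  by apply: filterS near_eq => y ->.
apply/derivable_mxP => i j; rewrite Mc.
exact: SM_derivable (SM_iterSM (SF i j) vs) x v Ux.
Unshelve. all: by end_near.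
Qed.

End SMdef.
Section Dist.
Variables (R : realFieldType) (m : nat) (L : 'M[R]_(m,4)) (j : 'I_4).
Hypothesis Lsign : forall i, L i j = 1 \/ L i j = -1.
Hypothesis Lpos : exists i, L i j = 1.
Hypothesis Lneg : exists i, L i j = -1.

Definition dist (u : 'rV[R]_m) := (forall i, 0 < u 0 i) /\ \sum_i u 0 i = 1.

Lemma step_key (u : 'rV[R]_m) s : \sum_i u 0 i = 1 ->
  1 + (u *m L) 0 j * s = \sum_k u 0 k * (1 + L k j * s).
Proof.
move=> su; rewrite mxE mulr_suml.
under [RHS]eq_bigr do rewrite mulrDr mulr1 mulrA.
by rewrite big_split /= su.
Qed.

Lemma step_pos (u : 'rV[R]_m) i : dist u -> 0 < 1 + (u *m L) 0 j * L i j.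
Proof.
move=> [up su]; rewrite step_key // (bigD1 i) //=.
have h1 : 0 < u 0 i * (1 + L i j * L i j).
  by have := up i; case: (Lsign i) => ->; lra.
have h2 : 0 <= \sum_(k | k != i) u 0 k * (1 + L k j * L i j).
  apply: sumr_ge0 => k _; have := up k.
  by case: (Lsign i) => ->; case: (Lsign k) => ->; lra.
lra.
Qed.

Lemma step_dist (u : 'rV[R]_m) : dist u -> dist (ab_step L j u).
Proof.
move=> du; have [up su] := du.
have [ip Hip] := Lpos; have [in_ Hin] := Lneg.
set mu := (u *m L) 0 j.
have P0 : 0 < 1 + mu by have := step_pos ip du; rewrite Hip mulr1.
have Q0 : 0 < 1 - mu by have := step_pos in_ du; rewrite Hin mulrN1.
have P0' : 1 + mu != 0 by rewrite gt_eqF.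
have Q0' : 1 - mu != 0 by rewrite gt_eqF.
split.
  move=> i; rewrite mxE; apply: divr_gt0; first exact: up.
  exact: step_pos.
have E : forall i, ab_step L j u 0 i =
   (u 0 i * (1 + L i j * 1)) / 2 / (1 + mu) + (u 0 i * (1 + L i j * -1)) / 2 / (1 - mu).
  move=> i; rewrite mxE -/mu.
  case: (Lsign i) => ->.
    by rewrite mulr1; field; rewrite ?P0' ?Q0'.
  by rewrite mulrN1; field; rewrite ?P0' ?Q0'.
under eq_bigr do rewrite E.
rewrite big_split /= -!mulr_suml -!step_key // mulr1 mulrN1.
by rewrite -/mu; field; rewrite ?P0' ?Q0'.
Qed.

End Dist.

Section Good.
Variables (R : realType) (n : nat) (U : set 'rV[R]_n).

Lemma SM_sum (I : Type) (r : seq I) (h : I -> 'rV[R]_n -> R) :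
  (forall k, SM U (h k)) -> SM U (fun y => \sum_(k <- r) h k y).
Proof.
move=> Hh; elim: r => [|a r IH].
  by apply: (SMeq (SMc U 0)) => x _; rewrite big_nil.
apply: (SMeq (SMadd (Hh a) IH)) => x _; by rewrite big_cons.
Qed.

Definition good m (u : 'rV[R]_n -> 'rV[R]_m) :=
  (forall i, SM U (fun y => u y 0 i)) /\ (forall y, U y -> dist (u y)).

Lemma good_step m (L : 'M[R]_(m,4)) j (u : 'rV[R]_n -> 'rV[R]_m) :
  (forall i, L i j = 1 \/ L i j = -1) -> (exists i, L i j = 1) -> (exists i, L i j = -1) ->
  good u -> good (fun y => ab_step L j (u y)).
Proof.
move=> Ls Lp Ln [Su Du]; split; last by move=> y Uy; exact: step_dist (Du y Uy).
move=> i.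
have Smu : SM U (fun y => \sum_k u y 0 k * L k j).
  by apply: SM_sum => k; apply: SMmul => //; exact: SMc.
apply: (SMeq (f := fun y => u y 0 i * (1 + (\sum_k u y 0 k * L k j) * L i j)^-1)).
  apply: SMmul => //; apply: SMinv.
    by apply: SMadd; [exact: SMc|apply: SMmul => //; exact: SMc].
  move=> x Ux; have := step_pos Ls i (Du x Ux); rewrite mxE => h.
  by rewrite gt_eqF.
by move=> x Ux; rewrite !mxE.
Qed.

End Good.

Ltac fnd4 := first
  [ exists (@Ordinal 4 0 isT); rewrite mxE /=; reflexivity
  | exists (@Ordinal 4 1 isT); rewrite mxE /=; reflexivity
  | exists (@Ordinal 4 2 isT); rewrite mxE /=; reflexivity
  | exists (@Ordinal 4 3 isT); rewrite mxE /=; reflexivity ].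

Lemma LA_col (R : realType) (j : 'I_4) :
  (forall i, LA R i j = 1 \/ LA R i j = -1) /\ (exists i, LA R i j = 1) /\
  (exists i, LA R i j = -1).
Proof.
case: j => [[|[|[|[|j]]]] Hj] //; (split; [case => [[|[|[|[|i]]]] Hi] //; rewrite mxE /=; by [left|right] | split; fnd4]).
Qed.

Ltac fnd5 := first
  [ exists (@Ordinal 5 0 isT); rewrite mxE /=; reflexivity
  | exists (@Ordinal 5 1 isT); rewrite mxE /=; reflexivity
  | exists (@Ordinal 5 2 isT); rewrite mxE /=; reflexivity
  | exists (@Ordinal 5 3 isT); rewrite mxE /=; reflexivity
  | exists (@Ordinal 5 4 isT); rewrite mxE /=; reflexivity ].

Lemma LB_col (R : realType) (j : 'I_4) :
  (forall i, LB R i j = 1 \/ LB R i j = -1) /\ (exists i, LB R i j = 1) /\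
  (exists i, LB R i j = -1).
Proof.
case: j => [[|[|[|[|j]]]] Hj] //; (split; [case => [[|[|[|[|[|i]]]]] Hi] //; rewrite mxE /=; by [left|right] | split; fnd5]).
Qed.

Lemma good_stepA (R : realType) n (U : set 'rV[R]_n) j (u : 'rV[R]_n -> 'rV[R]_4) :
  good U u -> good U (fun y => ab_step (LA R) j (u y)).
Proof. by have [a [b c]] := LA_col R j; exact: good_step. Qed.

Lemma good_stepB (R : realType) n (U : set 'rV[R]_n) j (u : 'rV[R]_n -> 'rV[R]_5) :
  good U u -> good U (fun y => ab_step (LB R) j (u y)).
Proof. by have [a [b c]] := LB_col R j; exact: good_step. Qed.

Lemma chartA_good (R : realType) : good (@SigmaA R) (@chartA R).
Proof.
split.
  case => [[|[|[|[|i]]]] Hi] //.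
  - apply: (SMeq (f := fun y : 'rV[R]_2 => y 0 0 - 2^-1)); last by move=> y _; rewrite !mxE.
    by apply: SMadd; [exact: SMx|exact: SMc].
  - apply: (SMeq (f := fun y : 'rV[R]_2 => 1 - y 0 0)); last by move=> y _; rewrite !mxE.
    by apply: SMadd; [exact: SMc|apply: SMopp; exact: SMx].
  - apply: (SMeq (f := fun y : 'rV[R]_2 => 2^-1 - y 0 1)); last by move=> y _; rewrite !mxE.
    by apply: SMadd; [exact: SMc|apply: SMopp; exact: SMx].
  - apply: (SMeq (f := fun y : 'rV[R]_2 => y 0 1)); last by move=> y _; rewrite !mxE.
    exact: SMx.
move=> y [/andP[h1 h2] /andP[h3 h4]]; split.
  by case => [[|[|[|[|i]]]] Hi] //; rewrite !mxE /=; lra.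
rewrite !big_ord_recr big_ord0 /= !mxE /=; lra.
Qed.

Lemma chartB_good (R : realType) : good (@SigmaB R) (@chartB R).
Proof.
split.
  case => [[|[|[|[|[|i]]]]] Hi] //.
  - apply: (SMeq (f := fun y : 'rV[R]_3 => y 0 0 - 2^-1)); last by move=> y _; rewrite !mxE.
    by apply: SMadd; [exact: SMx|exact: SMc].
  - apply: (SMeq (f := fun y : 'rV[R]_3 => 1 - y 0 0)); last by move=> y _; rewrite !mxE.
    by apply: SMadd; [exact: SMc|apply: SMopp; exact: SMx].
  - apply: (SMeq (f := fun y : 'rV[R]_3 => 2^-1 - y 0 1 - y 0 2)); last by move=> y _; rewrite !mxE.
    by apply: SMadd; [apply: SMadd; [exact: SMc|apply: SMopp; exact: SMx]|apply: SMopp; exact: SMx].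
  - apply: (SMeq (f := fun y : 'rV[R]_3 => y 0 1)); last by move=> y _; rewrite !mxE.
    exact: SMx.
  - apply: (SMeq (f := fun y : 'rV[R]_3 => y 0 2)); last by move=> y _; rewrite !mxE.
    exact: SMx.
move=> y [/andP[h1 h2] [h3 [h4 h5]]]; split.
  by case => [[|[|[|[|[|i]]]]] Hi] //; rewrite !mxE /=; lra.
rewrite !big_ord_recr big_ord0 /= !mxE /=; lra.
Qed.

Lemma near_gt_at (R : realType) n (x : 'rV[R]_n) (g : 'rV[R]_n -> R) z :
  g @ x --> g x -> z < g x -> \forall y \near x, z < g y.
Proof. by move=> Hg Hz; exact: (@cvgr_gt R _ (nbhs x) (nbhs_filter x) g (g x) Hg z Hz). Qed.

Lemma near_lt_at (R : realType) n (x : 'rV[R]_n) (g : 'rV[R]_n -> R) z :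
  g @ x --> g x -> g x < z -> \forall y \near x, g y < z.
Proof. by move=> Hg Hz; exact: (@cvgr_lt R _ (nbhs x) (nbhs_filter x) g (g x) Hg z Hz). Qed.

Lemma coord_at (R : realType) n (x : 'rV[R]_n) i :
  (fun y : 'rV[R]_n => y 0 i) @ x --> x 0 i.
Proof. exact: coord_continuous. Qed.

Lemma SigmaA_open (R : realType) (x : 'rV[R]_2) :
  SigmaA x -> \forall y \near x, SigmaA y.
Proof.
move=> [/andP[h1 h2] /andP[h3 h4]].
near=> y; split; apply/andP; split; near: y.
- exact: (near_gt_at (coord_at (x:=x) (i:=0)) h1).
- exact: (near_lt_at (coord_at (x:=x) (i:=0)) h2).
- exact: (near_gt_at (coord_at (x:=x) (i:=1)) h3).
- exact: (near_lt_at (coord_at (x:=x) (i:=1)) h4).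
Unshelve. all: by end_near.
Qed.

Lemma SigmaB_open (R : realType) (x : 'rV[R]_3) :
  SigmaB x -> \forall y \near x, SigmaB y.
Proof.
move=> [/andP[h1 h2] [h3 [h4 h5]]].
have cs : (fun y : 'rV[R]_3 => y 0 1 + y 0 2) @ x --> x 0 1 + x 0 2.
  exact: (@cvgD _ _ _ (nbhs x) (nbhs_filter x) _ _ _ _ (coord_at (x:=x) (i:=1)) (coord_at (x:=x) (i:=2))).
near=> y; split; [apply/andP; split|split; [|split]]; near: y.
- exact: (near_gt_at (coord_at (x:=x) (i:=0)) h1).
- exact: (near_lt_at (coord_at (x:=x) (i:=0)) h2).
- exact: (near_gt_at (coord_at (x:=x) (i:=1)) h3).
- exact: (near_gt_at (coord_at (x:=x) (i:=2)) h4).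
- exact: (near_lt_at cs h5).
Unshelve. all: by end_near.
Qed.

Lemma unchartA_SM (R : realType) (w : 'rV[R]_2 -> 'rV[R]_4) :
  good (@SigmaA R) w -> smooth_on (@SigmaA R) (fun y => unchartA (w y)).
Proof.
move=> [Sw _]; apply: mx_smooth; first exact: SigmaA_open.
move=> i [[|[|j]] Hj] //.
- apply: (SMeq (f := fun y => w y 0 0 + 2^-1)); last by move=> y _; rewrite !mxE.
  by apply: SMadd; [exact: Sw|exact: SMc].
- apply: (SMeq (f := fun y => w y 0 3)); last by move=> y _; rewrite !mxE.
  exact: Sw.
Qed.

Lemma unchartB_SM (R : realType) (w : 'rV[R]_3 -> 'rV[R]_5) :
  good (@SigmaB R) w -> smooth_on (@SigmaB R) (fun y => unchartB (w y)).
Proof.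
move=> [Sw _]; apply: mx_smooth; first exact: SigmaB_open.
move=> i [[|[|[|j]]] Hj] //.
- apply: (SMeq (f := fun y => w y 0 0 + 2^-1)); last by move=> y _; rewrite !mxE.
  by apply: SMadd; [exact: Sw|exact: SMc].
- apply: (SMeq (f := fun y => w y 0 3)); last by move=> y _; rewrite !mxE.
  exact: Sw.
- apply: (SMeq (f := fun y => w y 0 4)); last by move=> y _; rewrite !mxE.
  exact: Sw.
Qed.

Lemma smooth_F0A (R : realType) : smooth_on (@SigmaA R) (@F0A R).
Proof.
apply: (unchartA_SM (w := fun y => ab_branch (LA R) (inord 0) (inord 2) (inord 3) (inord 0) (inord 1) (chartA y))).
rewrite /ab_branch; do 5 apply: good_stepA; exact: chartA_good.
Qed.

Lemma smooth_F1A (R : realType) : smooth_on (@SigmaA R) (@F1A R).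
Proof.
apply: (unchartA_SM (w := fun y => ab_branch (LA R) (inord 0) (inord 3) (inord 2) (inord 0) (inord 1) (chartA y))).
rewrite /ab_branch; do 5 apply: good_stepA; exact: chartA_good.
Qed.

Lemma smooth_F0B (R : realType) : smooth_on (@SigmaB R) (@F0B R).
Proof.
apply: (unchartB_SM (w := fun y => ab_branch (LB R) (inord 0) (inord 2) (inord 3) (inord 0) (inord 1) (chartB y))).
rewrite /ab_branch; do 5 apply: good_stepB; exact: chartB_good.
Qed.

Lemma smooth_F1B (R : realType) : smooth_on (@SigmaB R) (@F1B R).
Proof.
apply: (unchartB_SM (w := fun y => ab_branch (LB R) (inord 0) (inord 3) (inord 2) (inord 0) (inord 1) (chartB y))).
rewrite /ab_branch; do 5 apply: good_stepB; exact: chartB_good.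
Qed.

Ltac pos_tac := repeat (lazymatch goal with
  | |- is_true (0 < _ + _) => refine (addr_gt0 _ _)
  | |- is_true (0 < _ * _) => refine (mulr_gt0 _ _)
  | |- is_true (0 < _ ^+ _) => refine (exprn_gt0 _ _)
  | |- is_true (0 < 1) => exact: ltr01
  | |- is_true (0 < _ %:R) => by rewrite ltr0n
  | |- _ => assumption
  end).

Definition TQA (R : realType) (a b c d : R) : R := 64 * (28 * a^+4 * c^+4 + (2^+7) * a^+4 * c^+3 * d + (11 * 17) * a^+4 * c^+2 * d^+2 + (3^+2 * 11) * a^+4 * c * d^+3 + 14 * a^+4 * d^+4 + 48 * a^+3 * b * c^+4 + (2 * 11^+2) * a^+3 * b * c^+3 * d + (359) * a^+3 * b * c^+2 * d^+2 + (2 * 3 * 29) * a^+3 * b * c * d^+3 + 17 * a^+3 * b * d^+4 + 27 * a^+2 * b^+2 * c^+4 + (7 * 23) * a^+2 * b^+2 * c^+3 * d + (2 * 3 * 41) * a^+2 * b^+2 * c^+2 * d^+2 + (3 * 5 * 7) * a^+2 * b^+2 * c * d^+3 + 5 * a^+2 * b^+2 * d^+4 + 5 * a * b^+3 * c^+4 + 42 * a * b^+3 * c^+3 * d + (67) * a * b^+3 * c^+2 * d^+2 + 22 * a * b^+3 * c * d^+3 + 3 * b^+4 * c^+3 * d + 5 * b^+4 * c^+2 * d^+2).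

Lemma TQA_pos (R : realType) (a b c d : R) : 0 < a -> 0 < b -> 0 < c -> 0 < d -> 0 < TQA a b c d.
Proof. move=> ha hb hc hd; rewrite /TQA; pos_tac. Qed.

Definition TRA (R : realType) (a b c d : R) : R := 64 * (4 * a^+4 * c^+4 + 32 * a^+4 * c^+3 * d + 53 * a^+4 * c^+2 * d^+2 + 25 * a^+4 * c * d^+3 + 2 * a^+4 * d^+4 + 8 * a^+3 * b * c^+4 + (2 * 3 * 13) * a^+3 * b * c^+3 * d + (131) * a^+3 * b * c^+2 * d^+2 + 56 * a^+3 * b * c * d^+3 + 3 * a^+3 * b * d^+4 + 5 * a^+2 * b^+2 * c^+4 + (67) * a^+2 * b^+2 * c^+3 * d + (2 * 3 * 19) * a^+2 * b^+2 * c^+2 * d^+2 + 41 * a^+2 * b^+2 * c * d^+3 + 1 * a^+2 * b^+2 * d^+4 + 1 * a * b^+3 * c^+4 + 24 * a * b^+3 * c^+3 * d + 41 * a * b^+3 * c^+2 * d^+2 + 10 * a * b^+3 * c * d^+3 + 3 * b^+4 * c^+3 * d + 5 * b^+4 * c^+2 * d^+2).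

Lemma TRA_pos (R : realType) (a b c d : R) : 0 < a -> 0 < b -> 0 < c -> 0 < d -> 0 < TRA a b c d.
Proof. move=> ha hb hc hd; rewrite /TRA; pos_tac. Qed.

Definition TQB (R : realType) (a b c d e : R) : R := 64 * (28 * a^+4 * c^+4 + (2^+7) * a^+4 * c^+3 * d + (2^+2 * 31) * a^+4 * c^+3 * e + (11 * 17) * a^+4 * c^+2 * d^+2 + (2 * 193) * a^+4 * c^+2 * d * e + (191) * a^+4 * c^+2 * e^+2 + (3^+2 * 11) * a^+4 * c * d^+3 + (2 * 7 * 23) * a^+4 * c * d^+2 * e + (3 * 113) * a^+4 * c * d * e^+2 + (2^+2 * 29) * a^+4 * c * e^+3 + 14 * a^+4 * d^+4 + (5 * 13) * a^+4 * d^+3 * e + (109) * a^+4 * d^+2 * e^+2 + (79) * a^+4 * d * e^+3 + 21 * a^+4 * e^+4 + 48 * a^+3 * b * c^+4 + (2 * 11^+2) * a^+3 * b * c^+3 * d + (2 * 3 * 37) * a^+3 * b * c^+3 * e + (359) * a^+3 * b * c^+2 * d^+2 + (2 * 5 * 73) * a^+3 * b * c^+2 * d * e + (347) * a^+3 * b * c^+2 * e^+2 + (2 * 3 * 29) * a^+3 * b * c * d^+3 + (2 * 3 * 5 * 19) * a^+3 * b * c * d^+2 * e + (2 * 13 * 23) * a^+3 * b * c * d * e^+2 + (2 * 101) * a^+3 * b * c * e^+3 + 17 * a^+3 * b * d^+4 + (2^+2 * 3 * 7) * a^+3 * b * d^+3 * e + (2 * 73) * a^+3 * b * d^+2 * e^+2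 + (2^+2 * 3^+3) * a^+3 * b * d * e^+3 + 29 * a^+3 * b * e^+4 + 27 * a^+2 * b^+2 * c^+4 + (7 * 23) * a^+2 * b^+2 * c^+3 * d + (2^+2 * 3 * 11) * a^+2 * b^+2 * c^+3 * e + (2 * 3 * 41) * a^+2 * b^+2 * c^+2 * d^+2 + (3 * 7 * 23) * a^+2 * b^+2 * c^+2 * d * e + (211) * a^+2 * b^+2 * c^+2 * e^+2 + (3 * 5 * 7) * a^+2 * b^+2 * c * d^+3 + (2 * 3^+2 * 19) * a^+2 * b^+2 * c * d^+2 * e + (353) * a^+2 * b^+2 * c * d * e^+2 + (2^+2 * 29) * a^+2 * b^+2 * c * e^+3 + 5 * a^+2 * b^+2 * d^+4 + 27 * a^+2 * b^+2 * d^+3 * e + 49 * a^+2 * b^+2 * d^+2 * e^+2 + 37 * a^+2 * b^+2 * d * e^+3 + 10 * a^+2 * b^+2 * e^+4 + 5 * a * b^+3 * c^+4 + 42 * a * b^+3 * c^+3 * d + 26 * a * b^+3 * c^+3 * e + (67) * a * b^+3 * c^+2 * d^+2 + (2 * 61) * a * b^+3 * c^+2 * d * e + 43 * a * b^+3 * c^+2 * e^+2 + 22 * a * b^+3 * c * d^+3 + (2 * 5 * 7) * a * b^+3 * c * d^+2 * e + (2 * 5 * 7) * a * b^+3 * c * d * e^+2 + 22 * a * b^+3 * c * e^+3 + 3 * b^+4 * c^+3 * d + 5 * b^+4 * c^+2 * d^+2 + 7 * b^+4 * c^+2 * d * e).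

Lemma TQB_pos (R : realType) (a b c d e : R) : 0 < a -> 0 < b -> 0 < c -> 0 < d -> 0 < e -> 0 < TQB a b c d e.
Proof. move=> ha hb hc hd he; rewrite /TQB; pos_tac. Qed.

Definition TRB (R : realType) (a b c d e : R) : R := 64 * (4 * a^+4 * c^+4 + 32 * a^+4 * c^+3 * d + 20 * a^+4 * c^+3 * e + 53 * a^+4 * c^+2 * d^+2 + (2 * 47) * a^+4 * c^+2 * d * e + 33 * a^+4 * c^+2 * e^+2 + 25 * a^+4 * c * d^+3 + (2 * 3 * 13) * a^+4 * c * d^+2 * e + (73) * a^+4 * c * d * e^+2 + 20 * a^+4 * c * e^+3 + 2 * a^+4 * d^+4 + 11 * a^+4 * d^+3 * e + 19 * a^+4 * d^+2 * e^+2 + 13 * a^+4 * d * e^+3 + 3 * a^+4 * e^+4 + 8 * a^+3 * b * c^+4 + (2 * 3 * 13) * a^+3 * b * c^+3 * d + 42 * a^+3 * b * c^+3 * e + (131) * a^+3 * b * c^+2 * d^+2 + (2 * 113) * a^+3 * b * c^+2 * d * e + (71) * a^+3 * b * c^+2 * e^+2 + 56 * a^+3 * b * c * d^+3 + (2 * 3 * 29) * a^+3 * b * c * d^+2 * e + (2^+5 * 5) * a^+3 * b * c * d * e^+2 + 42 * a^+3 * b * c * e^+3 + 3 * a^+3 * b * d^+4 + 18 * a^+3 * b * d^+3 * e + 32 * a^+3 * b * d^+2 * e^+2 + 22 * a^+3 * b * d * e^+3 + 5 * a^+3 * b * e^+4 + 5 * a^+2 * b^+2 * c^+4 + (67) *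 a^+2 * b^+2 * c^+3 * d + 28 * a^+2 * b^+2 * c^+3 * e + (2 * 3 * 19) * a^+2 * b^+2 * c^+2 * d^+2 + (3^+3 * 7) * a^+2 * b^+2 * c^+2 * d * e + 49 * a^+2 * b^+2 * c^+2 * e^+2 + 41 * a^+2 * b^+2 * c * d^+3 + (2 * 3^+2 * 7) * a^+2 * b^+2 * c * d^+2 * e + (113) * a^+2 * b^+2 * c * d * e^+2 + 28 * a^+2 * b^+2 * c * e^+3 + 1 * a^+2 * b^+2 * d^+4 + 7 * a^+2 * b^+2 * d^+3 * e + 13 * a^+2 * b^+2 * d^+2 * e^+2 + 9 * a^+2 * b^+2 * d * e^+3 + 2 * a^+2 * b^+2 * e^+4 + 1 * a * b^+3 * c^+4 + 24 * a * b^+3 * c^+3 * d + 6 * a * b^+3 * c^+3 * e + 41 * a * b^+3 * c^+2 * d^+2 + 64 * a * b^+3 * c^+2 * d * e + 11 * a * b^+3 * c^+2 * e^+2 + 10 * a * b^+3 * c * d^+3 + 30 * a * b^+3 * c * d^+2 * e + 26 * a * b^+3 * c * d * e^+2 + 6 * a * b^+3 * c * e^+3 + 3 * b^+4 * c^+3 * d + 5 * b^+4 * c^+2 * d^+2 + 7 * b^+4 * c^+2 * d * e).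

Lemma TRB_pos (R : realType) (a b c d e : R) : 0 < a -> 0 < b -> 0 < c -> 0 < d -> 0 < e -> 0 < TRB a b c d e.
Proof. move=> ha hb hc hd he; rewrite /TRB; pos_tac. Qed.

Lemma QA_pos (R : realType) (p d : R) : 2^-1 < p < 1 -> 0 < d < 2^-1 -> 0 < QA p d /\ 0 < RA p d.
Proof.
move=> /andP[h1 h2] /andP[h3 h4].
have E1 : QA p d = TQA (p - 2^-1) (1 - p) (2^-1 - d) d by rewrite /QA /TQA; field.
have E2 : RA p d = TRA (p - 2^-1) (1 - p) (2^-1 - d) d by rewrite /RA /TRA; field.
rewrite E1 E2; split; [apply: TQA_pos|apply: TRA_pos]; lra.
Qed.

Lemma QB_pos (R : realType) (p d e : R) : 2^-1 < p < 1 -> 0 < d -> 0 < e -> d + e < 2^-1 ->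
  0 < QB p d e /\ 0 < RB p d e.
Proof.
move=> /andP[h1 h2] h3 h4 h5.
have E1 : QB p d e = TQB (p - 2^-1) (1 - p) (2^-1 - d - e) d e by rewrite /QB /TQB; field.
have E2 : RB p d e = TRB (p - 2^-1) (1 - p) (2^-1 - d - e) d e by rewrite /RB /TRB; field.
rewrite E1 E2; split; [apply: TQB_pos|apply: TRB_pos]; lra.
Qed.

Theorem lemma3 (R : realType) :
  (forall p d : R, 2^-1 < p < 1 -> 0 < d < 2^-1 ->
     QA p d != 0 /\ RA p d != 0) /\
  (forall p d e : R, 2^-1 < p < 1 -> 0 < d -> 0 < e -> d + e < 2^-1 ->
     QB p d e != 0 /\ RB p d e != 0) /\
  smooth_on (@SigmaA R) (@F0A R) /\ smooth_on (@SigmaA R) (@F1A R) /\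
  smooth_on (@SigmaB R) (@F0B R) /\ smooth_on (@SigmaB R) (@F1B R).
Proof.
split; [|split; [|split; [|split; [|split]]]].
- move=> p d hp hd; have [h1 h2] := QA_pos hp hd.
  by rewrite !gt_eqF.
- move=> p d e hp hd he hde; have [h1 h2] := QB_pos hp hd he hde.
  by rewrite !gt_eqF.
- exact: smooth_F0A.
- exact: smooth_F1A.
- exact: smooth_F0B.
- exact: smooth_F1B.
Qed.
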